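(* Let $\mathbf{QL}_1\subseteq\mathbf{QL}_2$ be intermediate predicate logics with the same propositional fragment $\mathbf{L}$. Suppose Herbrand's theorem for existential formulas holds in $\mathbf{QL}_2$. Then for every existential formula $A$, $\vdash_{\mathbf{QL}_1}A$ iff $\vdash_{\mathbf{QL}_2}A$. If moreover $\mathbf{QL}_1$ proves all instances of $\forall x(C(x)\lor B)\to(\forall x\,C(x)\lor B)$ ($x$ not free in $B$), then the same equivalence holds for every prenex formula $A$.
   Context: Intermediate predicate logic: a set of first-order formulas containing intuitionistic predicate logic, contained in classical predicate logic, closed under substitution, modus ponens and the quantifier rules (from $B\to A(x)$ infer $B\to\forall y\,A(y)$; from $A(x)\to B$ infer $\exists y\,A(y)\to B$; $x$ not free in the conclusion). The propositional fragment is the set of its propositional formulas; $\vdash_{\mathbf{L}}$ on quantifier-free formulas means derivability by substitution instances of theorems of $\mathbf{L}$ and modus ponens. An existential formula is one of the form $\exists x_1\dots\exists x_n\,A'(x_1,\dots,x_n)$ with $A'$ quantifier-free. Herbrand's theorem for existential formulas holds in $\mathbf{QL}_2$ if whenever $\vdash_{\mathbf{QL}_2}\exists x_1\dots\exists x_n\,A'(x_1,\dots,x_n)$ ($A'$ quantifier-free), there are terms $t_{ij}$ with $\vdash_{\mathbf{L}}\bigvee_{j=1}^k A'(t_{1j},\dots,t_{nj})$. For a prenex formula $A$, its Herbrand form $H(A)$ is the existential formula obtained by deleting each universal quantifier $\forall y$ and replacing $y$ by $f_y(x_1,\dots,x_k)$, where $f_y$ is a new function symbol and $x_1,\dots,x_k$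 are the existentially quantified variables whose quantifiers precede $\forall y$. *)

(* Defs.v *)
From Stdlib Require Import List Arith.
Import ListNotations.

(* A function symbol
   is identified by its name together with its arity (= length of the
   argument list); constants are 0-ary function symbols. *)
Inductive term : Type :=
| tvar : nat -> term
| tfun : nat -> list term -> term.

(* A predicate symbol is
   identified by its name together with its arity; 0-ary predicate symbols
   are the propositional variables.  Bound variables are de Bruijn indices:
   [All A] / [Ex A] bind index 0 of [A]. *)
Inductive form : Type :=
| Bot : form
| Atom : nat -> list term -> form
| And : form -> form -> form
| Or : form -> form -> form
| Imp : form -> form -> form
| All : form -> form
| Ex : form -> form.

Definition Neg (A : form) : form := Imp A Bot.

Fixpoint tsubst (s : nat -> term) (t : term) : term :=
  match t with
  | tvar n => s n
  | tfun f ts => tfun f (map (tsubst s) ts)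
  end.

Definition up (s : nat -> term) : nat -> term :=
  fun n => match n with
           | 0 => tvar 0
           | S m => tsubst (fun k => tvar (S k)) (s m)
           end.

Fixpoint fsubst (s : nat -> term) (A : form) : form :=
  match A with
  | Bot => Bot
  | Atom p ts => Atom p (map (tsubst s) ts)
  | And B C => And (fsubst s B) (fsubst s C)
  | Or B C => Or (fsubst s B) (fsubst s C)
  | Imp B C => Imp (fsubst s B) (fsubst s C)
  | All B => All (fsubst (up s) B)
  | Ex B => Ex (fsubst (up s) B)
  end.

(* shift all free variables by one (makes index 0 not free) *)
Definition lift (A : form) : form := fsubst (fun n => tvar (S n)) A.

(* A(t): instantiate the variable bound by an outer quantifier by t *)
Definition inst0 (t : term) (A : form) : form :=
  fsubst (fun n => match n with 0 => t | S m => tvar m end) A.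

(* Substitution of formulas for predicate symbols.  [s p n] is the formula
   substituted for the n-ary predicate symbol p: in it the variables
   0..n-1 stand for the n arguments, and variable n+j stands for the free
   (global) variable j.  [k] is the number of binders passed so far. *)
Fixpoint psubst_at (s : nat -> nat -> form) (k : nat) (A : form) : form :=
  match A with
  | Bot => Bot
  | Atom p ts =>
      let n := length ts in
      fsubst (fun i => if i <? n then nth i ts (tvar 0) else tvar (i - n + k))
             (s p n)
  | And B C => And (psubst_at s k B) (psubst_at s k C)
  | Or B C => Or (psubst_at s k B) (psubst_at s k C)
  | Imp B C => Imp (psubst_at s k B) (psubst_at s k C)
  | All B => All (psubst_at s (S k) B)
  | Ex B => Ex (psubst_at s (S k) B)
  end.

Definition psubst (s : nat -> nat -> form) (A : form) : form := psubst_at s 0 A.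

(* Hilbert calculus: intuitionistic predicate logic (cl = false) and
   classical predicate logic (cl = true, adds excluded middle). *)
Inductive prov (cl : bool) : form -> Prop :=
| ax_K A B : prov cl (Imp A (Imp B A))
| ax_S A B C : prov cl (Imp (Imp A (Imp B C)) (Imp (Imp A B) (Imp A C)))
| ax_andE1 A B : prov cl (Imp (And A B) A)
| ax_andE2 A B : prov cl (Imp (And A B) B)
| ax_andI A B : prov cl (Imp A (Imp B (And A B)))
| ax_orI1 A B : prov cl (Imp A (Or A B))
| ax_orI2 A B : prov cl (Imp B (Or A B))
| ax_orE A B C : prov cl (Imp (Imp A C) (Imp (Imp B C) (Imp (Or A B) C)))
| ax_bot A : prov cl (Imp Bot A)
| ax_all A t : prov cl (Imp (All A) (inst0 t A))
| ax_ex A t : prov cl (Imp (inst0 t A) (Ex A))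
| ax_lem A : cl = true -> prov cl (Or A (Neg A))
| r_mp A B : prov cl (Imp A B) -> prov cl A -> prov cl B
| r_all B A : prov cl (Imp (lift B) A) -> prov cl (Imp B (All A))
| r_ex A B : prov cl (Imp A (lift B)) -> prov cl (Imp (Ex A) B).

Definition IQC : form -> Prop := prov false.
Definition CQC : form -> Prop := prov true.

(* Intermediate predicate logic, given as the set of its theorems. *)
Definition intermediate (QL : form -> Prop) : Prop :=
  (forall A, IQC A -> QL A) /\
  (forall A, QL A -> CQC A) /\
  (forall s A, QL A -> QL (psubst s A)) /\
  (forall A B, QL (Imp A B) -> QL A -> QL B) /\
  (* from B -> A(x) infer B -> forall y A(y), x not free in B *)
  (forall A B, QL (Imp (lift B) A) -> QL (Imp B (All A))) /\
  (* from A(x) -> B infer exists y A(y) -> B, x not free in B *)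
  (forall A B, QL (Imp A (lift B)) -> QL (Imp (Ex A) B)).

Fixpoint qfree (A : form) : Prop :=
  match A with
  | Bot | Atom _ _ => True
  | And B C | Or B C | Imp B C => qfree B /\ qfree C
  | All _ | Ex _ => False
  end.

Fixpoint propf (A : form) : Prop :=
  match A with
  | Bot => True
  | Atom _ ts => ts = []
  | And B C | Or B C | Imp B C => propf B /\ propf C
  | All _ | Ex _ => False
  end.

Definition same_prop_fragment (QL1 QL2 : form -> Prop) : Prop :=
  forall A, propf A -> (QL1 A <-> QL2 A).

(* |-_L on quantifier-free formulas, L the propositional fragment of QL:
   derivability by substitution instances (propositional variables replaced
   by quantifier-free formulas) of theorems of L, and modus ponens. *)
Inductive derivL (QL : form -> Prop) : form -> Prop :=
| dL_inst (s : nat -> nat -> form) (B : form) :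
    propf B -> QL B -> (forall p, qfree (s p 0)) -> derivL QL (psubst s B)
| dL_mp A B : derivL QL (Imp A B) -> derivL QL A -> derivL QL B.

Fixpoint exs (n : nat) (A : form) : form :=
  match n with 0 => A | S m => Ex (exs m A) end.

Definition existential (A : form) : Prop :=
  exists n A', qfree A' /\ A = exs n A'.

Inductive prenex : form -> Prop :=
| prenex_qf A : qfree A -> prenex A
| prenex_all A : prenex A -> prenex (All A)
| prenex_ex A : prenex A -> prenex (Ex A).

(* instantiate the n = length ts outermost-bound variables of a matrix
   (de Bruijn indices 0..n-1) by the terms ts *)
Definition inst_list (ts : list term) : nat -> term :=
  fun i => if i <? length ts then nth i ts (tvar 0) else tvar (i - length ts).

Fixpoint bigOr (l : list form) : form :=
  match l with
  | [] => Bot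
  | [A] => A
  | A :: l' => Or A (bigOr l')
  end.

Definition herbrand_ex (QL : form -> Prop) : Prop :=
  forall (n : nat) (A' : form), qfree A' -> QL (exs n A') ->
    exists tss : list (list term),
      tss <> [] /\ Forall (fun ts => length ts = n) tss /\
      derivL QL (bigOr (map (fun ts => fsubst (inst_list ts) A') tss)).

Definition shift_schema (C B : form) : form :=
  Imp (All (Or C (lift B))) (Or (All C) B).

(* Main.v *)
Require Import Defs.
From Stdlib Require Import List Arith Lia FunctionalExtensionality ClassicalEpsilon Classical.
Import ListNotations.


Section TermInd.
Variable P : term -> Prop.
Hypothesis Hvar : forall n, P (tvar n).
Hypothesis Hfun : forall f ts, Forall P ts -> P (tfun f ts).
Fixpoint term_ind' (t : term) : P t :=
  match t with
  | tvar n => Hvar n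
  | tfun f ts => Hfun f ts
      ((fix go (l : list term) : Forall P l :=
          match l with
          | [] => Forall_nil _
          | x :: l' => Forall_cons _ (term_ind' x) (go l')
          end) ts)
  end.
End TermInd.

Fixpoint tvars (t : term) : list nat :=
  match t with
  | tvar n => [n]
  | tfun _ ts => concat (map tvars ts)
  end.

Lemma tsubst_ext_vars : forall t s s', (forall i, In i (tvars t) -> s i = s' i) ->
  tsubst s t = tsubst s' t.
Proof.
  induction t using term_ind'; intros s s' Hs; simpl in *.
  - apply Hs; auto.
  - f_equal. induction H; simpl; auto.
    simpl in Hs. f_equal.
    + apply H. intros; apply Hs; apply in_or_app; auto.
    + apply IHForall. intros; apply Hs; apply in_or_app; auto.
Qed.

Lemma tsubst_comp : forall t s r, tsubst s (tsubst r t) = tsubst (fun i => tsubst s (r i)) t.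
Proof.
  induction t using term_ind'; intros; simpl; auto.
  f_equal. rewrite map_map. induction H; simpl; auto. f_equal; auto.
Qed.

Lemma tsubst_id : forall t, tsubst tvar t = t.
Proof.
  induction t using term_ind'; simpl; auto.
  f_equal. induction H; simpl; auto. f_equal; auto.
Qed.

Definition sh : nat -> term := fun k => tvar (S k).

Lemma up_comp : forall s r i, up (fun j => tsubst s (r j)) i = tsubst (up s) (up r i).
Proof.
  intros s r [|i]; simpl; auto.
  rewrite !tsubst_comp. apply tsubst_ext_vars. intros; simpl. reflexivity.
Qed.

Lemma fsubst_comp : forall A s r, fsubst s (fsubst r A) = fsubst (fun i => tsubst s (r i)) A.
Proof.
  induction A; intros; simpl; f_equal; auto.
  - rewrite map_map. apply map_ext. intros; apply tsubst_comp.
  - rewrite IHA. f_equal. extensionality i. symmetry; apply up_comp.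
  - rewrite IHA. f_equal. extensionality i. symmetry; apply up_comp.
Qed.

Lemma up_id : up tvar = tvar.
Proof. extensionality i. destruct i; reflexivity. Qed.

Lemma fsubst_id : forall A, fsubst tvar A = A.
Proof.
  induction A; simpl; f_equal; auto; try (rewrite up_id; auto).
  rewrite <- (map_id l) at 2. apply map_ext. apply tsubst_id.
Qed.

Lemma fsubst_id' : forall A s, (forall i, s i = tvar i) -> fsubst s A = A.
Proof.
  intros. replace s with tvar. apply fsubst_id. extensionality i; auto.
Qed.

Definition cons_s (t : term) (s : nat -> term) : nat -> term :=
  fun i => match i with 0 => t | S k => s k end.

Lemma inst0_up : forall t r X, inst0 t (fsubst (up r) X) = fsubst (cons_s t r) X.
Proof.
  intros. unfold inst0. rewrite fsubst_comp. f_equal. extensionality i.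
  destruct i; simpl; auto. rewrite tsubst_comp. simpl. apply tsubst_id.
Qed.

Definition wf (N : nat) (X : form) : Prop :=
  forall s s', (forall i, i < N -> s i = s' i) -> fsubst s X = fsubst s' X.

Lemma wf_mono : forall N N' X, wf N X -> N <= N' -> wf N' X.
Proof. unfold wf; intros. apply H. intros; apply H1; lia. Qed.

Lemma up_agree : forall N s s', (forall i, i < N -> s i = s' i) ->
  forall i, i < S N -> up s i = up s' i.
Proof. intros. destruct i; simpl; auto. rewrite H; auto; lia. Qed.

Lemma wf_All_inv : forall N X, wf N (All X) -> wf (S N) X.
Proof.
  unfold wf; intros.
  assert (E: forall s, s = cons_s (s 0) (fun k => s (S k))).
  { intros. extensionality i. destruct i; auto. }
  rewrite (E s), (E s'), <- !inst0_up. rewrite (H0 0) by lia. f_equal.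
  specialize (H (fun k => s (S k)) (fun k => s' (S k))). simpl in H.
  assert (fsubst (up (fun k : nat => s (S k))) X = fsubst (up (fun k : nat => s' (S k))) X).
  { assert (All (fsubst (up (fun k : nat => s (S k))) X) = All (fsubst (up (fun k : nat => s' (S k))) X)).
    apply H. intros; apply H0; lia. injection H1; auto. }
  rewrite H1. auto.
Qed.

Lemma wf_Ex_inv : forall N X, wf N (Ex X) -> wf (S N) X.
Proof.
  unfold wf; intros.
  assert (E: forall s, s = cons_s (s 0) (fun k => s (S k))).
  { intros. extensionality i. destruct i; auto. }
  rewrite (E s), (E s'), <- !inst0_up. rewrite (H0 0) by lia. f_equal.
  specialize (H (fun k => s (S k)) (fun k => s' (S k))). simpl in H.
  assert (fsubst (up (fun k : nat => s (S k))) X = fsubst (up (fun k : nat => s' (S k))) X).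
  { assert (Ex (fsubst (up (fun k : nat => s (S k))) X) = Ex (fsubst (up (fun k : nat => s' (S k))) X)).
    apply H. intros; apply H0; lia. injection H1; auto. }
  rewrite H1. auto.
Qed.

Lemma term_bound : forall t, exists N, forall i, In i (tvars t) -> i < N.
Proof.
  induction t using term_ind'; simpl.
  - exists (S n). intros i [<-|[]]; lia.
  - induction H; simpl. exists 0; intros i [].
    destruct H as [N1 H1]. destruct IHForall as [N2 H2].
    exists (N1 + N2). intros i Hi. apply in_app_or in Hi as [Hi|Hi].
    apply H1 in Hi; lia. apply H2 in Hi; lia.
Qed.

Lemma wf_exists : forall X, exists N, wf N X.
Proof.
  induction X; unfold wf.
  - exists 0; auto.
  - assert (exists N, forall t, In t l -> forall i, In i (tvars t) -> i < N).
    { induction l. exists 0; intros t []. destruct IHl as [N HN].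
      destruct (term_bound a) as [N' HN'].
      exists (N + N'). intros t [<-|Ht] i Hi. apply HN' in Hi; lia.
      eapply HN in Hi; eauto; lia. }
    destruct H as [N HN]. exists N. intros. simpl. f_equal. apply map_ext_in.
    intros. apply tsubst_ext_vars. intros; apply H. eapply HN; eauto.
  - destruct IHX1 as [N1 H1], IHX2 as [N2 H2]. exists (N1+N2); intros; simpl.
    f_equal; [apply H1|apply H2]; intros; apply H; lia.
  - destruct IHX1 as [N1 H1], IHX2 as [N2 H2]. exists (N1+N2); intros; simpl.
    f_equal; [apply H1|apply H2]; intros; apply H; lia.
  - destruct IHX1 as [N1 H1], IHX2 as [N2 H2]. exists (N1+N2); intros; simpl.
    f_equal; [apply H1|apply H2]; intros; apply H; lia.
  - destruct IHX as [N H]. exists N. intros; simpl. f_equal. apply H.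
    intros. destruct i; simpl; auto. rewrite H0; auto; lia.
  - destruct IHX as [N H]. exists N. intros; simpl. f_equal. apply H.
    intros. destruct i; simpl; auto. rewrite H0; auto; lia.
Qed.

Definition Top := Imp Bot Bot.
Notation I := (prov false).

Lemma I_refl : forall A, I (Imp A A).
Proof.
  intros. eapply r_mp. eapply r_mp. apply (ax_S false A (Imp A A) A).
  apply ax_K. apply (ax_K false A A).
Qed.

Lemma I_K : forall A B, I B -> I (Imp A B).
Proof. intros. eapply r_mp. apply ax_K. auto. Qed.

Lemma I_trans : forall A B C, I (Imp A B) -> I (Imp B C) -> I (Imp A C).
Proof.
  intros. eapply r_mp. eapply r_mp. apply (ax_S false A B C).
  apply I_K; auto. auto.
Qed.

Lemma I_orE : forall A B C, I (Imp A C) -> I (Imp B C) -> I (Imp (Or A B) C).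
Proof. intros. eapply r_mp. eapply r_mp. apply ax_orE. auto. auto. Qed.

Lemma bigOr_in : forall l y, In y l -> I (Imp y (bigOr l)).
Proof.
  induction l as [|a l IH]; intros y Hy. destruct Hy.
  destruct l as [|b l'].
  - destruct Hy as [<-|[]]. apply I_refl.
  - destruct Hy as [<-|Hy].
    + apply ax_orI1.
    + eapply I_trans. apply IH; auto. apply ax_orI2.
Qed.

Lemma bigOr_elim : forall l Z, (forall x, In x l -> I (Imp x Z)) -> I (Imp (bigOr l) Z).
Proof.
  induction l as [|a l IH]; intros Z H. apply ax_bot.
  destruct l as [|b l'].
  - apply H; simpl; auto.
  - apply I_orE. apply H; simpl; auto. apply IH. intros; apply H; simpl; auto.
Qed.

Lemma bigOr_sub : forall l l', (forall x, In x l -> exists y, In y l' /\ I (Imp x y)) ->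
  I (Imp (bigOr l) (bigOr l')).
Proof.
  intros. apply bigOr_elim. intros. destruct (H x H0) as [y [Hy Hxy]].
  eapply I_trans. eauto. apply bigOr_in; auto.
Qed.

Lemma bigOr_cons1 : forall a l, I (Imp (bigOr (a :: l)) (Or a (bigOr l))).
Proof.
  intros. apply bigOr_elim. intros x [<-|Hx]. apply ax_orI1.
  eapply I_trans. apply bigOr_in; eauto. apply ax_orI2.
Qed.

Lemma bigOr_cons2 : forall a l, I (Imp (Or a (bigOr l)) (bigOr (a :: l))).
Proof.
  intros. apply I_orE. apply bigOr_in; simpl; auto.
  apply bigOr_sub. intros; exists x; split; simpl; auto. apply I_refl.
Qed.

Lemma lift_Ex_I : forall Y, I (Imp Y (lift (Ex Y))).
Proof.
  intros. unfold lift. simpl.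
  pose proof (ax_ex false (fsubst (up (fun n => tvar (S n))) Y) (tvar 0)).
  rewrite inst0_up in H. rewrite fsubst_id' in H. auto.
  intros [|i]; reflexivity.
Qed.

Lemma I_Ex_mono : forall X Y, I (Imp X Y) -> I (Imp (Ex X) (Ex Y)).
Proof. intros. apply r_ex. eapply I_trans; eauto. apply lift_Ex_I. Qed.

Lemma I_Top : I Top.
Proof. apply ax_bot. Qed.

Section QL.
Variable QL : form -> Prop.
Hypothesis HQL : intermediate QL.

Lemma Q_I : forall A, I A -> QL A.
Proof. apply HQL. Qed.
Lemma Q_mp : forall A B, QL (Imp A B) -> QL A -> QL B.
Proof. apply HQL. Qed.
Lemma Q_imp : forall A B, I (Imp A B) -> QL A -> QL B.
Proof. intros. eapply Q_mp; eauto. apply Q_I; auto. Qed.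

Lemma Q_gen : forall X, QL X -> QL (All X).
Proof.
  intros. destruct HQL as (_ & _ & _ & _ & Hall & _).
  eapply Q_mp. apply (Hall X Top). simpl.
  eapply Q_mp. apply Q_I. apply ax_K. auto. apply Q_I, I_Top.
Qed.

Lemma Q_subst : forall N X s, QL X -> wf N X -> QL (fsubst s X).
Proof.
  induction N; intros X s HX Hwf.
  - rewrite (Hwf s tvar) by (intros; lia). rewrite fsubst_id. auto.
  - assert (W: wf N (All X)).
    { intros r r' Hr. simpl. f_equal. apply Hwf. apply up_agree; auto. }
    pose proof (IHN (All X) (fun k => s (S k)) (Q_gen X HX) W). simpl in H.
    pose proof (ax_all false (fsubst (up (fun k => s (S k))) X) (s 0)) as H0.
    rewrite inst0_up in H0.
    replace (cons_s (s 0) (fun k => s (S k))) with s in H0.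
    eapply Q_imp; eauto.
    extensionality i; destruct i; auto.
Qed.
End QL.

Fixpoint quant (qs : list bool) (M : form) : form :=
  match qs with
  | [] => M
  | b :: qs' => (if b then All else Ex) (quant qs' M)
  end.

Definition Pform (qs : list bool) (M : form) (l : nat) (pre : list term) : form :=
  fsubst (inst_list (rev pre)) (quant (skipn l qs) M).

Lemma inst_list_cons : forall t l, inst_list (t :: l) = cons_s t (inst_list l).
Proof.
  intros. extensionality i. unfold inst_list. destruct i; simpl; auto.
Qed.

Lemma skipn_nth : forall (qs : list bool) l, l < length qs ->
  skipn l qs = nth l qs false :: skipn (S l) qs.
Proof.
  induction qs; intros l H; simpl in *. lia.
  destruct l; simpl; auto. apply IHqs; lia.
Qed.

Lemma E_step : forall qs M l pre t, l < length qs -> nth l qs false = false ->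
  I (Imp (Pform qs M (S l) (pre ++ [t])) (Pform qs M l pre)).
Proof.
  intros. unfold Pform. rewrite (skipn_nth qs l H), H0. simpl.
  pose proof (ax_ex false (fsubst (up (inst_list (rev pre))) (quant (skipn (S l) qs) M)) t).
  rewrite inst0_up in H1. rewrite rev_app_distr. simpl. rewrite inst_list_cons. auto.
Qed.

Lemma wf_skipn : forall k qs M NA, k <= length qs -> wf NA (quant qs M) ->
  wf (k + NA) (quant (skipn k qs) M).
Proof.
  induction k; intros qs M NA Hk Hw. simpl; auto.
  destruct qs as [|b qs]; simpl in *. lia.
  replace (S (k + NA)) with (k + S NA) by lia. apply IHk. lia.
  destruct b; [apply wf_All_inv|apply wf_Ex_inv]; auto.
Qed.

Lemma fsubst_bigOr : forall s l, fsubst s (bigOr l) = bigOr (map (fsubst s) l).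
Proof.
  induction l as [|a l IH]; simpl; auto. destruct l; simpl in *; auto. rewrite IH; auto.
Qed.

Definition kappa (V : nat) : nat -> term := fun i => if i =? V then tvar 0 else tvar (S i).

Lemma kappa_pt : forall V NA pre i, NA <= V -> (forall u, In u pre -> ~ In V (tvars u)) ->
  i < length pre + NA ->
  tsubst (kappa V) (inst_list (rev pre) i) = tsubst sh (inst_list (rev pre) i).
Proof.
  intros. unfold inst_list. rewrite length_rev.
  destruct (i <? length pre) eqn:E.
  - apply tsubst_ext_vars. intros j Hj. unfold kappa, sh.
    destruct (j =? V) eqn:E2; auto. apply Nat.eqb_eq in E2; subst.
    exfalso. apply Nat.ltb_lt in E. eapply H0; [|eauto].
    apply in_rev. apply nth_In. rewrite length_rev; auto.
  - apply Nat.ltb_ge in E. simpl. unfold kappa, sh.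
    destruct (i - length pre =? V) eqn:E2; auto. apply Nat.eqb_eq in E2. lia.
Qed.

Section U.
Variable QL : form -> Prop.
Hypothesis HQL : intermediate QL.
Hypothesis HCD : forall C B, QL (shift_schema C B).
Variables (qs : list bool) (M : form) (NA : nat).
Hypothesis HwA : wf NA (quant qs M).

Definition Pf (d : nat * list term) := Pform qs M (fst d) (snd d).

Lemma K1 : forall V d, NA <= V -> fst d <= length qs -> length (snd d) = fst d ->
  (forall u, In u (snd d) -> ~ In V (tvars u)) ->
  fsubst (kappa V) (Pf d) = fsubst sh (Pf d).
Proof.
  intros V [l pre] HV Hl Hlen Hu. simpl in *. unfold Pf, Pform; simpl.
  rewrite !fsubst_comp. apply (wf_skipn l qs M NA Hl HwA).
  intros. apply kappa_pt with NA; auto. lia.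
Qed.

Lemma U_step : forall l pre V Ds, l < length qs -> nth l qs false = true ->
  NA <= V -> length pre = l -> (forall u, In u pre -> ~ In V (tvars u)) ->
  (forall d, In d Ds -> fst d <= length qs /\ length (snd d) = fst d /\
      forall u, In u (snd d) -> ~ In V (tvars u)) ->
  QL (bigOr (Pform qs M (S l) (pre ++ [tvar V]) :: map Pf Ds)) ->
  QL (bigOr (Pform qs M l pre :: map Pf Ds)).
Proof.
  intros l pre V Ds Hl Hq HV Hlen Hpre HDs H.
  eapply Q_imp in H; [|auto|apply bigOr_cons1].
  destruct (wf_exists (Or (Pform qs M (S l) (pre ++ [tvar V])) (bigOr (map Pf Ds)))) as [N HN].
  eapply (Q_subst QL HQL N _ (kappa V)) in H; auto.
  simpl in H.
  assert (E1: fsubst (kappa V) (bigOr (map Pf Ds)) = lift (bigOr (map Pf Ds))).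
  { unfold lift. rewrite !fsubst_bigOr, !map_map. f_equal. apply map_ext_in.
    intros d Hd. destruct (HDs d Hd) as (H1 & H2 & H3). apply K1; auto. }
  assert (E2: fsubst (kappa V) (Pform qs M (S l) (pre ++ [tvar V])) =
              fsubst (up (inst_list (rev pre))) (quant (skipn (S l) qs) M)).
  { unfold Pform. rewrite fsubst_comp. apply (wf_skipn (S l) qs M NA Hl HwA).
    intros i Hi. rewrite rev_app_distr. simpl. rewrite inst_list_cons.
    destruct i; simpl. unfold kappa. rewrite Nat.eqb_refl. auto.
    apply kappa_pt with NA; auto. lia. }
  rewrite E1, E2 in H. apply (Q_gen QL HQL) in H.
  eapply Q_mp in H; [|auto|apply HCD].
  eapply Q_imp; [auto|apply bigOr_cons2|].
  unfold Pform at 1. rewrite (skipn_nth qs l Hl), Hq. simpl. auto.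
Qed.
End U.

Section SK.
Variable F : nat.
Definition sk (pre : list term) : term := tfun (F + length pre) pre.

Fixpoint build (qs : list bool) (xs pre : list term) : list term :=
  match qs with
  | [] => pre
  | true :: qs' => build qs' xs (pre ++ [sk pre])
  | false :: qs' => match xs with
                    | [] => build qs' [] pre
                    | x :: xs' => build qs' xs' (pre ++ [x])
                    end
  end.

Fixpoint nex (qs : list bool) : nat :=
  match qs with [] => 0 | b :: qs' => (if b then 0 else 1) + nex qs' end.

Definition ext_list (l : list term) (k : nat) : nat -> term :=
  fun i => if i <? length l then nth i l (tvar 0) else tvar (i - length l + k).

Definition shn (m : nat) : term -> term := tsubst (fun i => tvar (m + i)).
Definition evars (m : nat) : list term := rev (map tvar (seq 0 m)).

Lemma cons_ext : forall t l k, cons_s t (ext_list l k) = ext_list (t :: l) k.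
Proof. intros. extensionality i. unfold ext_list. destruct i; simpl; auto. Qed.

Lemma up_ext : forall l k, up (ext_list l k) = ext_list (tvar 0 :: map (tsubst sh) l) (S k).
Proof.
  intros. extensionality i. unfold ext_list. destruct i; simpl; auto.
  rewrite length_map. destruct (i <? length l) eqn:E.
  - apply Nat.ltb_lt in E. replace (S i <? S (length l)) with true by (symmetry; apply Nat.ltb_lt; lia).
    rewrite (nth_indep (map (tsubst sh) l) _ (tsubst sh (tvar 0))) by (rewrite length_map; auto).
    rewrite map_nth. reflexivity.
  - apply Nat.ltb_ge in E. replace (S i <? S (length l)) with false by (symmetry; apply Nat.ltb_ge; lia).
    simpl. f_equal. lia.
Qed.

Lemma tsubst_sk : forall s pre, tsubst s (sk pre) = sk (map (tsubst s) pre).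
Proof. intros. unfold sk. simpl. rewrite length_map. auto. Qed.

Lemma evars_S : forall e, evars (S e) = tvar e :: evars e.
Proof. intros. unfold evars. rewrite seq_S, map_app, rev_app_distr. auto. Qed.

Lemma SK_main : forall qs M pre k,
  I (Imp (fsubst (ext_list (rev pre) k) (quant qs M))
         (exs (nex qs) (fsubst (ext_list (rev (build qs (evars (nex qs)) (map (shn (nex qs)) pre))) (k + nex qs)) M))).
Proof.
  induction qs as [|b qs IH]; intros M pre k.
  - simpl. rewrite Nat.add_0_r.
    replace (map (shn 0) pre) with pre. apply I_refl.
    rewrite <- (map_id pre) at 1. apply map_ext. intros. symmetry. apply tsubst_id.
  - destruct b; simpl.
    + eapply I_trans. apply (ax_all false _ (sk pre)). rewrite inst0_up, cons_ext.
      specialize (IH M (pre ++ [sk pre]) k). rewrite rev_app_distr in IH. simpl in IH.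
      rewrite map_app in IH. simpl in IH. unfold shn at 2 in IH. rewrite tsubst_sk in IH.
      apply IH.
    + apply I_Ex_mono. rewrite up_ext.
      specialize (IH M (map (tsubst sh) pre ++ [tvar 0]) (S k)).
      rewrite rev_app_distr in IH. simpl in IH. rewrite map_rev. simpl in IH.
      rewrite evars_S.
      replace (k + S (nex qs)) with (S (k + nex qs)) by lia.
      replace (map (shn (S (nex qs))) pre ++ [tvar (nex qs)]) with
        (map (shn (nex qs)) (map (tsubst sh) pre ++ [tvar 0])). apply IH.
      rewrite map_app, map_map. simpl. unfold shn at 2. simpl. rewrite Nat.add_0_r.
      f_equal. apply map_ext. intros. unfold shn. rewrite tsubst_comp. simpl.
      f_equal. extensionality i. f_equal. lia.
Qed.
End SK.

Section SK2.
Variable F : nat.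

Lemma build_map : forall s qs xs pre,
  map (tsubst s) (build F qs xs pre) = build F qs (map (tsubst s) xs) (map (tsubst s) pre).
Proof.
  induction qs as [|b qs IH]; intros; simpl; auto.
  destruct b. rewrite IH, map_app. cbn [map]. rewrite tsubst_sk. auto.
  destruct xs; simpl; rewrite IH; auto. rewrite map_app; auto.
Qed.

Lemma map_nth_seq : forall (l : list term) d, map (fun k => nth k l d) (seq 0 (length l)) = l.
Proof.
  induction l; intros; simpl; auto. f_equal. rewrite <- seq_shift, map_map. simpl. auto.
Qed.

Lemma inst_ME : forall qs M ts, length ts = nex qs ->
  fsubst (inst_list ts) (fsubst (ext_list (rev (build F qs (evars (nex qs)) [])) (nex qs)) M)
  = fsubst (inst_list (rev (build F qs (rev ts) []))) M.
Proof.
  intros. rewrite fsubst_comp. f_equal. extensionality i.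
  set (L := rev (build F qs (evars (nex qs)) [])).
  assert (HL: map (tsubst (inst_list ts)) L = rev (build F qs (rev ts) [])).
  { unfold L. rewrite map_rev, build_map. simpl. f_equal. f_equal.
    unfold evars. rewrite map_rev, map_map. f_equal. rewrite <- H.
    rewrite <- (map_nth_seq ts (tvar 0)) at 2. apply map_ext_in.
    intros k Hk. apply in_seq in Hk. simpl. unfold inst_list.
    replace (k <? length ts) with true by (symmetry; apply Nat.ltb_lt; lia). auto. }
  rewrite <- HL. unfold ext_list, inst_list at 2. rewrite length_map.
  destruct (i <? length L) eqn:E.
  - apply Nat.ltb_lt in E.
    rewrite (nth_indep (map _ L) _ (tsubst (inst_list ts) (tvar 0))) by (rewrite length_map; auto).
    rewrite map_nth. auto.
  - simpl. unfold inst_list. replace (i - length L + nex qs <? length ts) with false.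
    f_equal. lia. symmetry; apply Nat.ltb_ge; lia.
Qed.

Lemma build_prefix : forall qs xs pre, exists suf, build F qs xs pre = pre ++ suf.
Proof.
  induction qs as [|b qs IH]; intros; simpl. exists []; rewrite app_nil_r; auto.
  destruct b. destruct (IH xs (pre ++ [sk F pre])) as [suf E]. rewrite E, <- app_assoc. eauto.
  destruct xs. apply IH.
  destruct (IH xs (pre ++ [t])) as [suf E]. rewrite E, <- app_assoc. eauto.
Qed.

Lemma build_length : forall qs xs pre, length xs = nex qs ->
  length (build F qs xs pre) = length pre + length qs.
Proof.
  induction qs as [|b qs IH]; intros; simpl in *. lia.
  destruct b. rewrite IH by auto. rewrite length_app; simpl; lia.
  destruct xs; simpl in *. lia. rewrite IH by lia. rewrite length_app; simpl; lia.
Qed.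

Lemma build_sk : forall qs xs pre p, length xs = nex qs -> p < length qs ->
  nth p qs false = true ->
  nth (length pre + p) (build F qs xs pre) (tvar 0) =
  sk F (firstn (length pre + p) (build F qs xs pre)).
Proof.
  induction qs as [|b qs IH]; intros xs pre p Hx Hp Hq; simpl in *. lia.
  destruct b.
  - destruct p.
    + destruct (build_prefix qs xs (pre ++ [sk F pre])) as [suf E]. rewrite E.
      rewrite Nat.add_0_r, <- app_assoc. rewrite app_nth2 by lia. rewrite Nat.sub_diag.
      simpl. rewrite firstn_app, Nat.sub_diag, firstn_all. simpl. rewrite app_nil_r. auto.
    + replace (length pre + S p) with (length (pre ++ [sk F pre]) + p)
        by (rewrite length_app; simpl; lia).
      apply IH; auto. lia.
  - destruct p. discriminate.
    destruct xs; simpl in Hx. lia.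
    replace (length pre + S p) with (length (pre ++ [t]) + p)
        by (rewrite length_app; simpl; lia).
    apply IH; auto. lia.
Qed.
End SK2.

Lemma qfree_fsubst : forall A s, qfree A -> qfree (fsubst s A).
Proof. induction A; simpl; intros; auto; try tauto; firstorder. Qed.

Lemma qfree_exs : forall n A, qfree A -> existential (exs n A).
Proof. intros. exists n, A. auto. Qed.

Fixpoint idx (L : list term) (t : term) : nat :=
  match L with
  | [] => 0
  | a :: L' => if excluded_middle_informative (a = t) then 0 else S (idx L' t)
  end.

Lemma idx_nth : forall L t, In t L -> nth (idx L t) L (tvar 0) = t.
Proof.
  induction L; simpl; intros t H. destruct H.
  destruct (excluded_middle_informative (a = t)); auto.
  destruct H. congruence. auto.
Qed.

Lemma idx_inj : forall L a b, In a L -> In b L -> idx L a = idx L b -> a = b.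
Proof.
  intros. rewrite <- (idx_nth L a), <- (idx_nth L b), H1; auto.
Qed.

Fixpoint subterms (t : term) : list term :=
  t :: match t with tvar _ => [] | tfun _ ts => concat (map subterms ts) end.

Fixpoint tsize (t : term) : nat :=
  match t with tvar _ => 1 | tfun _ ts => S (list_sum (map tsize ts)) end.

Lemma in_concat_map : forall {A B} (f : A -> list B) l y,
  In y (concat (map f l)) <-> exists x, In x l /\ In y (f x).
Proof.
  intros. rewrite in_concat. split.
  - intros [l' [H1 H2]]. apply in_map_iff in H1 as [x [<- Hx]]. eauto.
  - intros [x [Hx Hy]]. exists (f x). split; auto. apply in_map; auto.
Qed.

Lemma list_sum_in : forall l x, In x l -> x <= list_sum l.
Proof. induction l; simpl; intros x Hx; [destruct Hx|]. destruct Hx as [<-|H]; try lia. apply IHl in H; lia. Qed.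

Lemma sub_size : forall u s, In s (subterms u) -> tsize s <= tsize u.
Proof.
  induction u using term_ind'; simpl; intros s Hs.
  - destruct Hs as [<-|[]]; auto.
  - destruct Hs as [<-|Hs]; auto. apply in_concat_map in Hs as [x [Hx Hs]].
    rewrite Forall_forall in H. apply H in Hs; auto.
    pose proof (list_sum_in (map tsize ts) (tsize x) (in_map _ _ _ Hx)). lia.
Qed.

Lemma arg_sub_lt : forall g ts a s, In a ts -> In s (subterms a) -> tsize s < tsize (tfun g ts).
Proof.
  intros. apply sub_size in H0. simpl.
  pose proof (list_sum_in (map tsize ts) (tsize a) (in_map _ _ _ H)). lia.
Qed.

Lemma arg_sub : forall g ts a s, In a ts -> In s (subterms a) -> In s (subterms (tfun g ts)).
Proof. intros. simpl. right. apply in_concat_map. eauto. Qed.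

Lemma sub_refl : forall u, In u (subterms u).
Proof. destruct u; simpl; auto. Qed.

Lemma vars_sub : forall u i, In i (tvars u) -> In (tvar i) (subterms u).
Proof.
  induction u using term_ind'; simpl; intros i Hi.
  - destruct Hi as [<-|[]]; auto.
  - right. apply in_concat_map in Hi as [x [Hx Hi]]. apply in_concat_map. exists x.
    rewrite Forall_forall in H. split; auto.
Qed.

Definition headOK (F : nat) (s : term) : Prop :=
  match s with tvar _ => True | tfun g _ => g < F end.
Definition tfreeF (F : nat) (t : term) : Prop := forall s, In s (subterms t) -> headOK F s.

Fixpoint ffree (F : nat) (A : form) : Prop :=
  match A with
  | Bot => True
  | Atom _ ts => forall t, In t ts -> tfreeF F t
  | And B C | Or B C | Imp B C => ffree F B /\ ffree F C
  | All B | Ex B => ffree F B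
  end.

Lemma tfree_exists : forall t, exists F, forall F', F <= F' -> tfreeF F' t.
Proof.
  induction t using term_ind'.
  - exists 0. intros F' _ s [<-|[]]; simpl; auto.
  - assert (exists F, forall F', F <= F' -> forall t, In t ts -> tfreeF F' t).
    { induction H. exists 0; intros F' _ t []. destruct H as [F1 H1], IHForall as [F2 H2].
      exists (F1 + F2). intros F' HF t [<-|Ht]. apply H1; lia. apply H2; auto; lia. }
    destruct H0 as [F HF]. exists (S (F + f)). intros F' HF' s [<-|Hs]. simpl; lia.
    apply in_concat_map in Hs as [x [Hx Hs]]. eapply HF; eauto. lia.
Qed.

Lemma ffree_exists : forall A, exists F, forall F', F <= F' -> ffree F' A.
Proof.
  induction A; simpl.
  - exists 0; auto.
  - induction l. exists 0; intros F' _ t []. destruct IHl as [F1 H1].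
    destruct (tfree_exists a) as [F2 H2]. exists (F1 + F2). intros F' HF t [<-|Ht].
    apply H2; lia. apply H1; auto; lia.
  - destruct IHA1 as [F1 H1], IHA2 as [F2 H2]. exists (F1 + F2); split; [apply H1|apply H2]; lia.
  - destruct IHA1 as [F1 H1], IHA2 as [F2 H2]. exists (F1 + F2); split; [apply H1|apply H2]; lia.
  - destruct IHA1 as [F1 H1], IHA2 as [F2 H2]. exists (F1 + F2); split; [apply H1|apply H2]; lia.
  - auto.
  - auto.
Qed.

Fixpoint amap (g : nat -> list term -> form) (A : form) : form :=
  match A with
  | Bot => Bot
  | Atom p ts => g p ts
  | And B C => And (amap g B) (amap g C)
  | Or B C => Or (amap g B) (amap g C)
  | Imp B C => Imp (amap g B) (amap g C)
  | All B => All (amap g B)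
  | Ex B => Ex (amap g B)
  end.

Lemma amap_Atom : forall A, amap Atom A = A.
Proof. induction A; simpl; f_equal; auto. Qed.

Lemma amap_bigOr : forall g l, amap g (bigOr l) = bigOr (map (amap g) l).
Proof. induction l; simpl; auto. destruct l; simpl in *; auto. rewrite IHl; auto. Qed.

Lemma amap_psubst : forall g s B, propf B ->
  amap g (psubst s B) = psubst (fun p n => amap g (s p n)) B.
Proof.
  intros g s B. unfold psubst. induction B; simpl; intros H; auto.
  - subst. simpl. rewrite !fsubst_id'; auto; intros i; simpl; f_equal; lia.
  - destruct H; f_equal; auto.
  - destruct H; f_equal; auto.
  - destruct H; f_equal; auto.
  - destruct H.
  - destruct H.
Qed.

Lemma derivL_amap : forall QL1 QL2 g, intermediate QL1 -> same_prop_fragment QL1 QL2 ->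
  forall D, derivL QL2 D -> QL1 (amap g D).
Proof.
  intros QL1 QL2 g H1 Hs D HD. induction HD.
  - rewrite amap_psubst by auto. apply H1. apply Hs; auto.
  - simpl in IHHD1. eapply Q_mp; eauto.
Qed.

Section R.
Variables (F BIG : nat) (L : list term).
Fixpoint rr (t : term) : term :=
  match t with
  | tvar i => tvar i
  | tfun g ts => if F <=? g then tvar (BIG + idx L (tfun g ts)) else tfun g (map rr ts)
  end.

Lemma R1 : forall u V, In V (tvars (rr u)) ->
  In V (tvars u) \/ exists s, In s (subterms u) /\ V = BIG + idx L s.
Proof.
  induction u using term_ind'; simpl; intros V HV.
  - auto.
  - destruct (F <=? f).
    + simpl in HV. destruct HV as [<-|[]]. right. exists (tfun f ts); simpl; auto.
    + simpl in HV. rewrite map_map in HV. apply in_concat_map in HV as [x [Hx HV]].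
      rewrite Forall_forall in H. destruct (H x Hx V HV) as [H2|[s [Hs Es]]].
      * left. apply in_concat_map. eauto.
      * right. exists s. split; auto. right. apply in_concat_map; eauto.
Qed.

Lemma rr_tsubst : forall u s, tfreeF F u -> rr (tsubst s u) = tsubst (fun i => rr (s i)) u.
Proof.
  induction u using term_ind'; intros s Hu; simpl; auto.
  assert (f < F) by (apply (Hu (tfun f ts)); simpl; auto).
  replace (F <=? f) with false by (symmetry; apply Nat.leb_gt; auto).
  f_equal. rewrite map_map. apply map_ext_in. intros a Ha.
  rewrite Forall_forall in H. apply H; auto. intros s' Hs'. apply Hu. eapply arg_sub; eauto.
Qed.

Lemma amap_rr : forall M s, qfree M -> ffree F M ->
  amap (fun p ts => Atom p (map rr ts)) (fsubst s M) = fsubst (fun i => rr (s i)) M.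
Proof.
  induction M; simpl; intros s Hq Hf; auto; try (f_equal; destruct Hq, Hf; auto).
  all: try (destruct Hq; fail).
  f_equal. rewrite map_map. apply map_ext_in. intros; apply rr_tsubst; auto.
Qed.
End R.

Lemma sum_le : forall {X} (s : list X) (g h : X -> nat),
  (forall x, In x s -> g x <= h x) -> list_sum (map g s) <= list_sum (map h s).
Proof.
  induction s; simpl; intros g h H; auto.
  assert (g a <= h a) by auto. assert (list_sum (map g s) <= list_sum (map h s)) by auto. lia.
Qed.

Lemma sum_lt : forall {X} (s : list X) (g h : X -> nat),
  (forall x, In x s -> g x <= h x) -> (exists x, In x s /\ g x < h x) ->
  list_sum (map g s) < list_sum (map h s).
Proof.
  induction s; simpl; intros g h H1 [x [Hx H2]]. destruct Hx.
  destruct Hx as [<-|Hx].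
  - assert (list_sum (map g s) <= list_sum (map h s)) by (apply sum_le; auto). lia.
  - assert (g a <= h a) by auto. assert (list_sum (map g s) < list_sum (map h s)).
    apply IHs; eauto. lia.
Qed.

Lemma max_elem : forall {X} (l : list X) (P : X -> Prop) (f : X -> nat),
  (exists x, In x l /\ P x) -> exists x, In x l /\ P x /\ forall y, In y l -> P y -> f y <= f x.
Proof.
  induction l; simpl; intros P f [x [Hx Px]]. destruct Hx.
  destruct (classic (exists x, In x l /\ P x)) as [Hex|Hnex].
  - destruct (IHl P f Hex) as [m [Hm [Pm Hmax]]].
    destruct (le_lt_dec (f a) (f m)).
    + exists m. repeat split; auto. intros y [<-|Hy] Py; auto.
    + destruct (classic (P a)).
      * exists a. repeat split; auto. intros y [<-|Hy] Py; auto. specialize (Hmax y Hy Py). lia.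
      * exists m. repeat split; auto. intros y [<-|Hy] Py; auto. contradiction.
  - destruct Hx as [<-|Hx].
    + exists a. repeat split; auto. intros y [<-|Hy] Py; auto. exfalso; apply Hnex; eauto.
    + exfalso; apply Hnex; eauto.
Qed.

Lemma firstn_S_nth : forall (w : list term) l, l < length w ->
  firstn (S l) w = firstn l w ++ [nth l w (tvar 0)].
Proof.
  induction w; simpl; intros l H. lia. destruct l; simpl; auto. f_equal. apply IHw. lia.
Qed.

Lemma in_firstn_nth : forall (w : list term) k u, In u (firstn k w) ->
  exists m, m < k /\ m < length w /\ u = nth m w (tvar 0).
Proof.
  induction w; intros k u H. rewrite firstn_nil in H. destruct H.
  destruct k; simpl in H. destruct H.
  destruct H as [<-|H]. exists 0; simpl; repeat split; auto; lia.
  destruct (IHw k u H) as [m [H1 [H2 H3]]]. exists (S m); simpl; repeat split; auto; lia.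
Qed.

Lemma sub_cases : forall g ts s, In s (subterms (tfun g ts)) ->
  s = tfun g ts \/ exists a, In a ts /\ In s (subterms a).
Proof. simpl; intros. destruct H; auto. right. apply in_concat_map in H. auto. Qed.

Section Main.
Variable QL : form -> Prop.
Hypothesis HQL : intermediate QL.
Hypothesis HCD : forall C B, QL (shift_schema C B).
Variables (qs : list bool) (M : form) (NA : nat).
Hypothesis HwA : wf NA (quant qs M).
Variable F : nat.
Variable Vals : list (list term).
Hypothesis HV1 : forall v, In v Vals -> length v = length qs.
Hypothesis HV2 : forall v, In v Vals -> forall p, p < length qs -> nth p qs false = true ->
  nth p v (tvar 0) = sk F (firstn p v).

Definition LL := concat (map subterms (concat Vals)).
Definition BIG := S (list_max (concat (map tvars LL)) + NA).
Definition r := rr F BIG LL.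
Definition frm (d : nat * list term) : form :=
  Pform qs M (fst d) (firstn (fst d) (map r (snd d))).
Definition Inv (s : list (nat * list term)) : Prop :=
  forall d, In d s -> fst d <= length qs /\ In (snd d) Vals.

Lemma val_in_LL : forall v m, In v Vals -> m < length v -> forall s0, In s0 (subterms (nth m v (tvar 0))) -> In s0 LL.
Proof.
  intros. unfold LL. apply in_concat_map. exists (nth m v (tvar 0)). split; auto.
  apply in_concat. exists v. split; auto. apply nth_In; auto.
Qed.

Lemma var_small : forall t i, In t LL -> In i (tvars t) -> i < BIG.
Proof.
  intros. unfold BIG. assert (i <= list_max (concat (map tvars LL))).
  { pose proof (proj1 (list_max_le (concat (map tvars LL)) _) (Nat.le_refl _)) as HF.
    rewrite Forall_forall in HF. apply HF. apply in_concat_map. eauto. }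
  lia.
Qed.

Lemma in_firstn_of : forall (v : list term) k m, m < k -> m < length v ->
  In (nth m v (tvar 0)) (firstn k v).
Proof.
  intros.
  assert (nth m (firstn k v) (tvar 0) = nth m v (tvar 0)).
  { rewrite nth_firstn. replace (m <? k) with true by (symmetry; apply Nat.ltb_lt; auto). auto. }
  rewrite <- H1. apply nth_In. rewrite length_firstn. lia.
Qed.

Lemma fresh_key : forall s dm l, Inv s ->
  (forall d, In d s -> 0 < fst d -> nth (fst d - 1) qs false = true) ->
  In dm s -> fst dm = S l ->
  (forall d, In d s -> 0 < fst d ->
     tsize (nth (fst d - 1) (snd d) (tvar 0)) <= tsize (nth l (snd dm) (tvar 0))) ->
  forall d m, In d s -> m < fst d ->
  In (BIG + idx LL (nth l (snd dm) (tvar 0))) (tvars (r (nth m (snd d) (tvar 0)))) ->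
  m = l /\ fst d = S l /\ firstn (S l) (snd d) = firstn (S l) (snd dm).
Proof.
  intros s [k0 vals] l Hinv HnoE Hdm Hl Hmax [k v] m Hd Hm HV. simpl in *. subst k0.
  destruct (Hinv _ Hdm) as [Hl1 Hvals]. destruct (Hinv _ Hd) as [Hk Hv]. simpl in *.
  pose proof (HV1 _ Hvals) as Lvals. pose proof (HV1 _ Hv) as Lv.
  set (S0 := nth l vals (tvar 0)) in *.
  assert (HS0L : In S0 LL) by (apply (val_in_LL vals l Hvals); [lia| apply sub_refl]).
  unfold r in HV. apply R1 in HV as [HV|[s0 [Hs0 HVe]]].
  - exfalso. apply var_small in HV. unfold BIG in HV; lia. apply (val_in_LL v m Hv); [lia|apply sub_refl].
  - assert (s0 = S0).
    { apply (idx_inj LL); [apply (val_in_LL v m Hv); [lia|auto] | auto | unfold BIG in *; lia]. }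
    subst s0.
    assert (Htop : nth (k - 1) v (tvar 0) = sk F (firstn (k - 1) v)).
    { apply HV2; [auto|lia|]. apply (HnoE (k, v) Hd); simpl; lia. }
    assert (HS0 : S0 = sk F (firstn l vals)).
    { unfold S0. apply HV2; [auto|lia|]. pose proof (HnoE (S l, vals) Hdm) as H. simpl in H.
      replace (l - 0) with l in H by lia. apply H; lia. }
    pose proof (Hmax (k, v) Hd) as Hmx. simpl in Hmx. rewrite Htop in Hmx.
    assert (Hmx' : tsize (sk F (firstn (k - 1) v)) <= tsize S0) by (apply Hmx; lia).
    unfold sk in Hmx'.
    destruct (Nat.lt_ge_cases m (k - 1)) as [Hlt|Hge].
    + exfalso. pose proof (arg_sub_lt (F + length (firstn (k - 1) v)) (firstn (k - 1) v)
        (nth m v (tvar 0)) S0 (in_firstn_of v (k-1) m Hlt ltac:(lia)) Hs0). lia.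
    + assert (m = k - 1) by lia. subst m. rewrite Htop in Hs0. unfold sk in Hs0.
      apply sub_cases in Hs0 as [Heq|[a [Ha Hs]]].
      * rewrite HS0 in Heq. unfold sk in Heq. injection Heq as E1 E2.
        rewrite !length_firstn in E1.
        assert (Hkl : k = S l) by lia. subst k.
        replace (S l - 1) with l in * by lia.
        split; [auto|split;[auto|]].
        change (firstn (S l) v = firstn (S l) vals).
        rewrite (firstn_S_nth v l) by lia. rewrite (firstn_S_nth vals l) by lia.
        rewrite Htop. fold S0. rewrite HS0, E2. auto.
      * exfalso. pose proof (arg_sub_lt (F + length (firstn (k - 1) v)) (firstn (k - 1) v) a S0 Ha Hs). lia.
Qed.

Lemma r_skolem : forall g ts, F <= g -> r (tfun g ts) = tvar (BIG + idx LL (tfun g ts)).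
Proof. intros. unfold r. simpl. replace (F <=? g) with true by (symmetry; apply Nat.leb_le; auto). auto. Qed.

Lemma nth_map_r : forall v m, nth m (map r v) (tvar 0) = r (nth m v (tvar 0)).
Proof. intros. change (tvar 0) with (r (tvar 0)) at 1. apply map_nth. Qed.

Lemma Pform0 : Pform qs M 0 [] = quant qs M.
Proof. unfold Pform. simpl. apply fsubst_id'. intros i. unfold inst_list. simpl. f_equal. lia. Qed.

Lemma reassemble : forall m s, list_sum (map fst s) = m -> Inv s -> s <> [] ->
  QL (bigOr (map frm s)) -> QL (quant qs M).
Proof.
  induction m as [m IH] using lt_wf_ind. intros s Hm Hinv Hne H.
  destruct (classic (exists d, In d s /\ 0 < fst d /\ nth (fst d - 1) qs false = false)) as [HE|HnE].
  - set (f1 := fun d : nat * list term =>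
      if excluded_middle_informative (0 < fst d /\ nth (fst d - 1) qs false = false)
      then (fst d - 1, snd d) else d).
    apply (IH (list_sum (map fst (map f1 s)))) with (s := map f1 s); auto.
    + subst m. rewrite map_map. apply sum_lt.
      * intros x _. unfold f1. destruct excluded_middle_informative; simpl; lia.
      * destruct HE as [d [Hd [H1 H2]]]. exists d. split; auto. unfold f1.
        destruct excluded_middle_informative as [_|C]; simpl. lia. exfalso; auto.
    + intros d Hd. apply in_map_iff in Hd as [d0 [<- Hd0]]. destruct (Hinv d0 Hd0).
      unfold f1; destruct excluded_middle_informative; simpl; split; auto; lia.
    + destruct s; simpl; congruence.
    + eapply (Q_imp QL HQL); [|exact H]. apply bigOr_sub. intros x Hx.
      apply in_map_iff in Hx as [d [<- Hd]]. exists (frm (f1 d)). split.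
      apply in_map, in_map; auto.
      unfold f1. destruct excluded_middle_informative as [[Hp Hq]|Hn].
      * destruct d as [k v]. simpl in *. destruct (Hinv _ Hd) as [Hk Hv]. simpl in Hk, Hv.
        pose proof (HV1 _ Hv).
        unfold frm. simpl. destruct k as [|l]. lia. replace (S l - 1) with l in * by lia.
        rewrite (firstn_S_nth (map r v) l) by (rewrite length_map; lia).
        apply E_step; auto; lia.
      * apply I_refl.
  - assert (HnoE : forall d, In d s -> 0 < fst d -> nth (fst d - 1) qs false = true).
    { intros d Hd Hp. destruct (nth (fst d - 1) qs false) eqn:E; auto. exfalso; apply HnE; eauto. }
    clear HnE.
    destruct (classic (exists d, In d s /\ 0 < fst d)) as [HU|HZ].
    + destruct (max_elem s (fun d => 0 < fst d) (fun d => tsize (nth (fst d - 1) (snd d) (tvar 0))) HU)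
        as [[k vals] [Hdm [Hk0 Hmax]]]. simpl in Hk0.
      destruct k as [|l]. lia. simpl in Hmax. replace (l - 0) with l in Hmax by lia.
      destruct (Hinv _ Hdm) as [Hl Hvals]. simpl in Hl, Hvals.
      pose proof (HV1 _ Hvals) as Lvals.
      assert (Hql : nth l qs false = true).
      { pose proof (HnoE _ Hdm). simpl in H0. replace (l - 0) with l in H0 by lia. apply H0; lia. }
      set (S0 := nth l vals (tvar 0)).
      set (V := BIG + idx LL S0).
      assert (HS0 : S0 = sk F (firstn l vals)) by (apply HV2; auto; lia).
      assert (Hr0 : r S0 = tvar V).
      { unfold V. rewrite HS0. unfold sk. apply r_skolem. lia. }
      pose proof (fresh_key s (S l, vals) l Hinv HnoE Hdm eq_refl) as FK. simpl in FK.
      specialize (FK ltac:(intros d Hd Hp; apply Hmax; auto)).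
      set (gt := fun d : nat * list term => fst d = S l /\ firstn (S l) (snd d) = firstn (S l) vals).
      set (others := filter (fun d => if excluded_middle_informative (gt d) then false else true) s).
      set (Ds := map (fun d : nat * list term => (fst d, firstn (fst d) (map r (snd d)))) others).
      set (f2 := fun d : nat * list term => if excluded_middle_informative (gt d) then (l, snd d) else d).
      set (pre := firstn l (map r vals)).
      assert (Hoth : forall d, In d others <-> In d s /\ ~ gt d).
      { intros d. unfold others. rewrite filter_In.
        destruct excluded_middle_informative; split; intros [? ?]; try split; auto; congruence. }
      assert (Ha : QL (bigOr (Pform qs M (S l) (pre ++ [tvar V]) :: map (Pf qs M) Ds))).
      { eapply (Q_imp QL HQL); [|exact H]. apply bigOr_sub. intros x Hx.
        apply in_map_iff in Hx as [d [<- Hd]].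
        destruct (excluded_middle_informative (gt d)) as [[G1 G2]|G].
        - exists (Pform qs M (S l) (pre ++ [tvar V])). split. simpl; auto.
          unfold frm. rewrite G1, firstn_map, G2, <- firstn_map.
          rewrite (firstn_S_nth (map r vals) l) by (rewrite length_map; lia).
          rewrite nth_map_r. fold S0. rewrite Hr0. apply I_refl.
        - exists (frm d). split. simpl. right. unfold Ds. rewrite map_map. apply in_map.
          apply Hoth; auto. apply I_refl. }
      assert (Hb : QL (bigOr (Pform qs M l pre :: map (Pf qs M) Ds))).
      { apply (U_step QL HQL HCD qs M NA HwA l pre V Ds); auto.
        - unfold V, BIG. lia.
        - unfold pre. rewrite length_firstn, length_map. lia.
        - intros u Hu Hin. unfold pre in Hu. apply in_firstn_nth in Hu as [mm [H1 [H2 H3]]].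
          subst u. rewrite nth_map_r in Hin.
          destruct (FK (S l, vals) mm Hdm ltac:(simpl; lia) Hin). lia.
        - intros d' Hd'. unfold Ds in Hd'. apply in_map_iff in Hd' as [d [<- Hd]].
          apply Hoth in Hd as [Hd Hng]. destruct (Hinv _ Hd) as [Hk Hv].
          pose proof (HV1 _ Hv). simpl. split; auto. split.
          rewrite length_firstn, length_map. lia.
          intros u Hu Hin. apply in_firstn_nth in Hu as [mm [H1 [H2 H3]]].
          subst u. rewrite nth_map_r in Hin.
          destruct (FK d mm Hd H1 Hin) as (_ & E1 & E2). apply Hng. split; auto. }
      apply (IH (list_sum (map fst (map f2 s)))) with (s := map f2 s); auto.
      * subst m. rewrite map_map. apply sum_lt.
        -- intros x _. unfold f2. destruct excluded_middle_informative as [[G1 _]|]; simpl; lia.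
        -- exists (S l, vals). split; auto. unfold f2.
           destruct excluded_middle_informative as [_|C]; simpl. lia.
           exfalso; apply C; split; auto.
      * intros d Hd. apply in_map_iff in Hd as [d0 [<- Hd0]]. destruct (Hinv d0 Hd0).
        unfold f2; destruct excluded_middle_informative; simpl; split; auto; lia.
      * destruct s; simpl; congruence.
      * eapply (Q_imp QL HQL); [|exact Hb]. apply bigOr_sub. intros x Hx.
        destruct Hx as [<-|Hx].
        -- exists (frm (l, vals)). split.
           ++ apply in_map. apply in_map_iff. exists (S l, vals). split; auto.
              unfold f2. destruct excluded_middle_informative as [_|C]; auto.
              exfalso; apply C; split; auto.
           ++ apply I_refl.
        -- unfold Ds in Hx. rewrite map_map in Hx. apply in_map_iff in Hx as [d [<- Hd]].
           apply Hoth in Hd as [Hd Hng]. exists (frm d). split.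
           ++ apply in_map. apply in_map_iff. exists d. split; auto. unfold f2.
              destruct excluded_middle_informative; auto. contradiction.
           ++ apply I_refl.
    + eapply (Q_imp QL HQL); [|exact H]. apply bigOr_elim. intros x Hx.
      apply in_map_iff in Hx as [d [<- Hd]]. destruct d as [k v].
      destruct k. unfold frm. simpl. rewrite Pform0. apply I_refl.
      exfalso. apply HZ. exists (S k, v). simpl; split; auto; lia.
Qed.
End Main.

Lemma prenex_quant : forall A, prenex A -> exists qs M, qfree M /\ A = quant qs M.
Proof.
  induction 1. exists [], A; auto.
  destruct IHprenex as [qs [M [H1 H2]]]. exists (true :: qs), M. subst; auto.
  destruct IHprenex as [qs [M [H1 H2]]]. exists (false :: qs), M. subst; auto.
Qed.

Lemma quant_false : forall n A, quant (repeat false n) A = exs n A.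
Proof. induction n; simpl; intros; auto. rewrite IHn; auto. Qed.

Lemma Echain : forall qs M k w, k <= length qs -> length w = length qs ->
  (forall p, p < k -> nth p qs false = false) ->
  I (Imp (Pform qs M k (firstn k w)) (Pform qs M 0 [])).
Proof.
  induction k; intros w Hk Hw Hp. apply I_refl.
  rewrite (firstn_S_nth w k) by lia. eapply I_trans. apply E_step. lia. apply Hp; lia.
  apply IHk; auto. lia.
Qed.

Lemma inst_r : forall NA F Vals l i,
  r NA F Vals (inst_list l i) = inst_list (map (r NA F Vals) l) i.
Proof.
  intros. unfold inst_list. rewrite length_map. destruct (i <? length l).
  symmetry; apply nth_map_r. reflexivity.
Qed.

Theorem mainTheorem17 (QL1 QL2 : form -> Prop) :
  intermediate QL1 -> intermediate QL2 ->
  (forall A, QL1 A -> QL2 A) ->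
  same_prop_fragment QL1 QL2 ->
  herbrand_ex QL2 ->
  (forall A, existential A -> (QL1 A <-> QL2 A)) /\
  ((forall C B, QL1 (shift_schema C B)) ->
   forall A, prenex A -> (QL1 A <-> QL2 A)).
Proof.
  intros H1 H2 H12 Hsp Hh. split.
  - intros A [n [A' [Hq ->]]]. split; auto. intros HA.
    destruct (Hh n A' Hq HA) as [tss [Hne [Hlen HD]]].
    pose proof (derivL_amap QL1 QL2 Atom H1 Hsp _ HD) as HD1. rewrite amap_Atom in HD1.
    eapply (Q_imp QL1 H1); [|exact HD1]. apply bigOr_elim. intros x Hx.
    apply in_map_iff in Hx as [ts [<- Hts]]. rewrite Forall_forall in Hlen.
    specialize (Hlen ts Hts).
    pose proof (Echain (repeat false n) A' n (rev ts)) as EC.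
    rewrite repeat_length, length_rev in EC. specialize (EC (le_n _) Hlen).
    rewrite Pform0, quant_false in EC.
    unfold Pform in EC. rewrite firstn_all2 in EC by (rewrite length_rev; lia).
    rewrite rev_involutive in EC. rewrite skipn_all2 in EC by (rewrite repeat_length; lia).
    simpl in EC. apply EC. intros p Hp. apply nth_repeat.
  - intros HCD A HA. split; auto. intros HA2.
    destruct (prenex_quant A HA) as [qs [M [Hq ->]]].
    destruct (wf_exists (quant qs M)) as [NA HwA].
    destruct (ffree_exists M) as [F HF]. specialize (HF F (le_n _)).
    set (e := nex qs).
    set (ME := fsubst (ext_list (rev (build F qs (evars e) [])) e) M).
    assert (HE : QL2 (exs e ME)).
    { eapply (Q_imp QL2 H2); [|exact HA2]. pose proof (SK_main F qs M [] 0) as SK.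
      simpl in SK. rewrite fsubst_id' in SK. exact SK.
      intros i. unfold ext_list. simpl. f_equal. lia. }
    destruct (Hh e ME (qfree_fsubst _ _ Hq) HE) as [tss [Hne [Hlen HD]]].
    rewrite Forall_forall in Hlen.
    set (Vals := map (fun ts => build F qs (rev ts) []) tss).
    assert (HV1 : forall v, In v Vals -> length v = length qs).
    { intros v Hv. apply in_map_iff in Hv as [ts [<- Hts]].
      rewrite build_length. auto. rewrite length_rev. apply Hlen; auto. }
    assert (HV2 : forall v, In v Vals -> forall p, p < length qs -> nth p qs false = true ->
               nth p v (tvar 0) = sk F (firstn p v)).
    { intros v Hv p Hp Hqp. apply in_map_iff in Hv as [ts [<- Hts]].
      apply (build_sk F qs (rev ts) [] p); auto. rewrite length_rev. apply Hlen; auto. }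
    set (s0 := map (fun v => (length qs, v)) Vals).
    apply (reassemble QL1 H1 HCD qs M NA HwA F Vals HV1 HV2 _ s0 eq_refl).
    + intros d Hd. unfold s0 in Hd. apply in_map_iff in Hd as [v [<- Hv]]. simpl; auto.
    + unfold s0, Vals. destruct tss; simpl; congruence.
    + pose proof (derivL_amap QL1 QL2 (fun p ts => Atom p (map (r NA F Vals) ts)) H1 Hsp _ HD) as HD1.
      rewrite amap_bigOr, map_map in HD1.
      replace (map (frm qs M NA F Vals) s0) with
        (map (fun x => amap (fun p ts => Atom p (map (r NA F Vals) ts)) (fsubst (inst_list x) ME)) tss).
      exact HD1.
      unfold s0, Vals. rewrite !map_map. apply map_ext_in. intros ts Hts.
      unfold ME, e. rewrite inst_ME by (apply Hlen; auto).
      unfold r. rewrite amap_rr by auto. fold (r NA F Vals).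
      unfold frm, Pform. simpl.
      assert (Lb : length (build F qs (rev ts) []) = length qs).
      { rewrite build_length. auto. rewrite length_rev. apply Hlen; auto. }
      rewrite firstn_all2 by (rewrite length_map; lia).
      rewrite skipn_all2 by lia. simpl. f_equal. extensionality i.
      rewrite <- map_rev, <- inst_r. reflexivity.
Qed.
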